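(* Let $(G,G_1,G_2)$ be a quasi-double Lie group with structure maps $\alpha$ and $m$, and let $\sigma:G_2\times G_1\to G_2$ be defined by: for $a\in G_2$, $g\in G_1$, $\sigma(a,g)$ is the unique element of $G_2$ such that $ag=g'\,\sigma(a,g)$ in $G$ for some $g'\in G_1$. For $a\in G_2$ let $\lambda_a,\rho_a:G_2\to G_2$ be the left and right translations of the loop, $\lambda_a(c)=m(a,c)$, $\rho_a(c)=m(c,a)$. Then for all $a,b,c\in G_2$: \begin{enumerate} \item $\lambda_{m(a,b)}(c)=(\lambda_{\sigma(a,\alpha(b,c))}\circ\lambda_b)(c)$; \item $\rho_{m(a,b)}(c)=(\rho_b\circ\rho_a)(\sigma(c,\alpha(a,b)^{-1}))$; \item $(\rho_b\circ\lambda_a)(c)=(\lambda_{\sigma(a,\alpha(c,b))}\circ\rho_b)(c)$. \end{enumerate}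
   Context: A Lie loop is a real analytic manifold $B$ with an analytic binary operation $(a,b)\mapsto ab=m(a,b)$ having a two-sided neutral element $\varepsilon$, such that the equations $ab=c$ and $ba=c$ have unique solutions depending analytically on the data. It is right mono-alternative if $(ab^{k})b^{l}=ab^{k+l}$ for all integers $k,l$ and all $a,b$ (near $\varepsilon$). A quasi-double Lie group is a triple $(G,G_1,G_2)$ where (i) $G$ is a Lie group with identity $e$ and $G_1$ a closed Lie subgroup of $G$; (ii) $G_2$ is a closed submanifold of $G$ equipped with analytic maps $\alpha:G_2\times G_2\to G_1$ and $m:G_2\times G_2\to G_2$ with $(ab)_G=\alpha(a,b)\,m(a,b)$ for all $a,b\in G_2$ (product in $G$ on the left), such that $m$ makes $G_2$ a right mono-alternative Lie loop; (iii) the map $G_1\times G_2\to G$, $(g,a)\mapsto ga$, is a diffeomorphism. *)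

(* Defs.v *)
Set Implicit Arguments.

Record Group := {
  carrier :> Type;
  gmul : carrier -> carrier -> carrier;
  ginv : carrier -> carrier;
  gone : carrier;
  gmulA : forall x y z, gmul x (gmul y z) = gmul (gmul x y) z;
  gmul1l : forall x, gmul gone x = x;
  gmul1r : forall x, gmul x gone = x;
  gmulVl : forall x, gmul (ginv x) x = gone;
  gmulVr : forall x, gmul x (ginv x) = gone
}.

Definition is_subgroup (G : Group) (H : G -> Prop) : Prop :=
  H (gone G) /\ (forall x y, H x -> H y -> H (gmul G x y)) /\
  (forall x, H x -> H (ginv G x)).

Definition is_loop (T : Type) (B : T -> Prop) (m : T -> T -> T) : Prop :=
  (forall a b, B a -> B b -> B (m a b)) /\
  (exists eps, B eps /\ forall a, B a -> m eps a = a /\ m a eps = a) /\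
  (forall a c, B a -> B c -> exists b, B b /\ m a b = c /\
     forall b', B b' -> m a b' = c -> b' = b) /\
  (forall a c, B a -> B c -> exists b, B b /\ m b a = c /\
     forall b', B b' -> m b' a = c -> b' = b).

(* Algebraic part of a quasi-double Lie group (G, G1, G2) with structure maps
   alpha and m. *)
Definition quasi_double (G : Group) (G1 G2 : G -> Prop)
    (alpha m : G -> G -> G) : Prop :=
  @is_subgroup G G1 /\
  (forall a b, G2 a -> G2 b ->
     G1 (alpha a b) /\ G2 (m a b) /\ gmul G a b = gmul G (alpha a b) (m a b)) /\
  @is_loop G G2 m /\
  (forall x : G, exists g a, G1 g /\ G2 a /\ x = gmul G g a) /\
  (forall g a g' a', G1 g -> G2 a -> G1 g' -> G2 a' ->
     gmul G g a = gmul G g' a' -> g = g' /\ a = a').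

Definition is_sigma (G : Group) (G1 G2 : G -> Prop) (sigma : G -> G -> G) : Prop :=
  forall a g, G2 a -> G1 g ->
    G2 (sigma a g) /\ exists g', G1 g' /\ gmul G a g = gmul G g' (sigma a g).

(* Main.v *)
Require Import Defs.

Theorem mainTheorem2 (G : Group) (G1 G2 : G -> Prop) (alpha m sigma : G -> G -> G) :
  @quasi_double G G1 G2 alpha m ->
  @is_sigma G G1 G2 sigma ->
  forall a b c, G2 a -> G2 b -> G2 c ->
    m (m a b) c = m (sigma a (alpha b c)) (m b c) /\
    m c (m a b) = m (m (sigma c (ginv G (alpha a b))) a) b /\
    m (m a c) b = m (sigma a (alpha c b)) (m c b).
Proof.
  intros [[S1 [SM SI]] [HA [[LC _] [_ INJ]]]] HS.
  assert (U : forall g x h y, G1 g -> G2 x -> G1 h -> G2 y ->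
            gmul G g x = gmul G h y -> x = y)
    by (intros g x h y ? ? ? ? E; exact (proj2 (INJ g x h y ltac:(assumption) ltac:(assumption) ltac:(assumption) ltac:(assumption) E))).
  assert (K : forall x y z, G2 x -> G2 y -> G2 z ->
            m (m x y) z = m (sigma x (alpha y z)) (m y z)).
  { intros x y z Hx Hy Hz.
    destruct (HA x y Hx Hy) as [A1 [M1 E1]].
    destruct (HA y z Hy Hz) as [A2 [M2 E2]].
    destruct (HA (m x y) z M1 Hz) as [A3 [M3 E3]].
    destruct (HS x (alpha y z) Hx A2) as [Sg [g' [Hg' Eg]]].
    destruct (HA (sigma x (alpha y z)) (m y z) Sg M2) as [A4 [M4 E4]].
    eapply (U (gmul G (alpha x y) (alpha (m x y) z))
              _ (gmul G g' (alpha (sigma x (alpha y z)) (m y z)))); auto.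
    rewrite <- !gmulA, <- E3, <- E4, gmulA, <- E1, gmulA, <- Eg, <- gmulA.
    idtac.
    rewrite E2. rewrite !gmulA; reflexivity. }
  intros a b c Ha Hb Hc.
  split; [apply K; auto|]. split; [|apply K; auto].
  destruct (HA a b Ha Hb) as [A1 [M1 E1]].
  set (g := alpha a b) in *.
  destruct (HS c (ginv G g) Hc (SI _ A1)) as [Sd [g' [Hg' Eg]]].
  set (d := sigma c (ginv G g)) in *.
  destruct (HA d a Sd Ha) as [A2 [M2 E2]].
  destruct (HA (m d a) b M2 Hb) as [A3 [M3 E3]].
  destruct (HA c (m a b) Hc M1) as [A4 [M4 E4]].
  symmetry.
  eapply (U (gmul G (alpha d a) (alpha (m d a) b)) _
            (gmul G (ginv G g') (alpha c (m a b)))); auto.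
  assert (Ec : c = gmul G (gmul G g' d) g).
  { rewrite <- Eg, <- gmulA, gmulVl, gmul1r. reflexivity. }
  rewrite <- !gmulA, <- E3, <- E4, gmulA, <- E2, <- gmulA, E1.
  rewrite Ec, !gmulA, gmulVl, gmul1l. reflexivity.
Qed.
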